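(* Let $s\ge 3$ be an integer, let $a,a_3,\dots,a_s\in\mathbb{R}$, and let \[ \psi(z)=\frac{1+\left(1-as\right)z+\left(\tfrac12-as+a^2\binom{s}{2}\right)z^2+\sum_{n=3}^{s}a_nz^n}{(1-az)^s}. \] (Every element of $\widehat{\Pi}_{s/s,2}$ can be written in this form.) If $R(\psi)>s-1$, then $a>0$.
   Context: A real rational function $\psi$ is always considered in lowest terms, as a smooth function on $\mathbb{R}$ minus its finitely many poles. It is absolutely monotonic at $x\in\mathbb{R}$ if $x$ is not a pole and $\psi^{(k)}(x)\ge 0$ for all integers $k\ge 0$. The radius of absolute monotonicity is $R(\psi)=\sup\big(\{r\in[0,\infty): \psi \text{ is absolutely monotonic at each point of } [-r,0]\}\cup\{0\}\big)\in[0,+\infty]$. $\widehat{\Pi}_{s/s,2}$ denotes the set of real rational functions $\psi(z)=P(z)/(1-az)^s$ with $P$ a real polynomial of degree at most $s$ and $a\in\mathbb{R}$, such that $\psi(z)-e^z=O(z^3)$ as $z\to0$. *)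

(* Defs.v *)
From Stdlib Require Import Reals Lra Lia.
Open Scope R_scope.

(* psi is absolutely monotonic at x: x is not a pole of (the lowest-terms
   rational function) psi and all derivatives of psi at x are >= 0.
   We express "x is not a pole" and "the k-th derivative exists" by the
   existence, on some interval around x, of a tower of functions D k with
   D 0 = psi on the punctured interval (so a removable singularity of the
   formula at x is filled in, as in lowest terms) and D (k+1) = (D k)'. *)
Definition abs_monotonic_at (psi : R -> R) (x : R) : Prop :=
  exists (delta : R) (D : nat -> R -> R),
    0 < delta /\
    (forall y, Rabs (y - x) < delta -> y <> x -> D O y = psi y) /\
    (forall (k : nat) (y : R), Rabs (y - x) < delta ->
        derivable_pt_lim (D k) y (D (S k) y)) /\
    (forall k : nat, 0 <= D k x).

(* The set whose supremum is the radius of absolute monotonicity R(psi). *)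
Definition am_radius_set (psi : R -> R) (r : R) : Prop :=
  r = 0 \/
  (0 <= r /\ forall x, -r <= x <= 0 -> abs_monotonic_at psi x).

Definition am_radius_gt (psi : R -> R) (c : R) : Prop :=
  exists r, am_radius_set psi r /\ c < r.

Definition psi_family (s : nat) (a : R) (an : nat -> R) (z : R) : R :=
  (1 + (1 - a * INR s) * z
     + (/ 2 - a * INR s + a ^ 2 * C s 2) * z ^ 2
     + sum_f 3 s (fun n => an n * z ^ n))
  / (1 - a * z) ^ s.

(* Main.v *)
Require Import Defs.
From Stdlib Require Import Reals Lra Lia.
Open Scope R_scope.

Lemma dpl_ext (f g : R -> R) y l l' :
  (forall x, f x = g x) -> l = l' -> derivable_pt_lim f y l -> derivable_pt_lim g y l'.
Proof.
  intros E El H eps Heps. destruct (H eps Heps) as [d Hd]. exists d.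
  intros h h0 hd. rewrite <- !E, <- El. now apply Hd.
Qed.

Lemma dpl_loc (f g : R -> R) x0 del y l :
  (forall z, Rabs (z - x0) < del -> f z = g z) -> Rabs (y - x0) < del ->
  derivable_pt_lim f y l -> derivable_pt_lim g y l.
Proof.
  intros E Hy H eps Heps. destruct (H eps Heps) as [d Hd].
  assert (P : 0 < Rmin d (del - Rabs (y - x0))).
  { apply Rmin_pos. apply cond_pos. lra. }
  exists (mkposreal _ P). simpl. intros h h0 hd.
  rewrite <- !E. apply Hd; auto. eapply Rlt_le_trans; [exact hd| apply Rmin_l].
  auto.
  assert (Rabs h < del - Rabs (y - x0)) by (eapply Rlt_le_trans; [exact hd| apply Rmin_r]).
  replace (y + h - x0) with ((y - x0) + h) by ring.
  eapply Rle_lt_trans. apply Rabs_triang. lra.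
Qed.

Lemma cont_punct (f g : R -> R) x del :
  0 < del -> continuity_pt f x -> continuity_pt g x ->
  (forall y, Rabs (y - x) < del -> y <> x -> f y = g y) -> f x = g x.
Proof.
  intros Hd Cf Cg E. destruct (Req_dec (f x) (g x)) as [e|ne]; auto.
  exfalso. set (d := Rabs (f x - g x)).
  assert (dp : 0 < d) by (apply Rabs_pos_lt; intro; apply ne; lra).
  assert (d2 : d/2 > 0) by lra.
  destruct (Cf (d/2) d2) as [a1 [a1p H1]].
  destruct (Cg (d/2) d2) as [a2 [a2p H2]].
  set (m := Rmin del (Rmin a1 a2)).
  assert (mp : 0 < m) by (apply Rmin_pos; auto; apply Rmin_pos; auto).
  assert (m1 : m <= del) by apply Rmin_l.
  assert (m2 : m <= a1) by (eapply Rle_trans; [apply Rmin_r|apply Rmin_l]).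
  assert (m3 : m <= a2) by (eapply Rle_trans; [apply Rmin_r|apply Rmin_r]).
  set (y := x + m/2).
  assert (hy : Rabs (y - x) = m/2) by (unfold y; replace (x + m/2 - x) with (m/2) by ring; apply Rabs_right; lra).
  assert (Dy : D_x no_cond x y) by (split; [exact I| unfold y; intro; lra]).
  assert (q1 : R_dist y x < a1) by (unfold R_dist; lra).
  assert (q2 : R_dist y x < a2) by (unfold R_dist; lra).
  specialize (H1 y (conj Dy q1)).
  specialize (H2 y (conj Dy q2)).
  simpl in H1, H2. unfold R_dist in H1, H2.
  rewrite E in H1 by (try lra; unfold y; intro; lra).
  assert (d <= Rabs (g y - f x) + Rabs (g y - g x)).
  { unfold d. replace (f x - g x) with (-(g y - f x) + (g y - g x)) by ring.
    eapply Rle_trans. apply Rabs_triang. rewrite Rabs_Ropp. lra. }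
  lra.
Qed.

Lemma dpl_cont f x l : derivable_pt_lim f x l -> continuity_pt f x.
Proof. intros H. apply derivable_continuous_pt. exists l. exact H. Qed.

Lemma sum_nonneg (f : nat -> R) N : (forall n, (n <= N)%nat -> 0 <= f n) -> 0 <= sum_f_R0 f N.
Proof.
  induction N; intros H; simpl. apply H; lia.
  apply Rplus_le_le_0_compat. apply IHN; intros; apply H; lia. apply H; lia.
Qed.

Lemma sum_zero (f : nat -> R) N : (forall n, (n <= N)%nat -> f n = 0) -> sum_f_R0 f N = 0.
Proof.
  induction N; intros H; simpl. apply H; lia.
  rewrite IHN by (intros; apply H; lia). rewrite H by lia. ring.
Qed.

Lemma sum_single (f : nat -> R) N j : (j <= N)%nat ->
  (forall n, (n <= N)%nat -> n <> j -> f n = 0) -> sum_f_R0 f N = f j.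
Proof.
  induction N; intros Hj H; simpl.
  - now replace j with 0%nat by lia.
  - destruct (Nat.eq_dec j (S N)) as [e|ne].
    + subst. rewrite sum_zero by (intros; apply H; lia). ring.
    + rewrite IHN by (try lia; intros; apply H; lia). rewrite (H (S N)) by lia. ring.
Qed.

Definition tower (D : nat -> R -> R) x0 del :=
  forall k y, Rabs (y - x0) < del -> derivable_pt_lim (D k) y (D (S k) y).

Definition mulT (a : R) (D : nat -> R -> R) (k : nat) (y : R) : R :=
  (1 - a*y) * D k y + INR k * (-a) * D (pred k) y.

Lemma mulT_tower a D x0 del : tower D x0 del -> tower (mulT a D) x0 del.
Proof.
  intros T k y Hy. unfold mulT.
  assert (H1 : derivable_pt_lim (fun y => 1 - a*y) y (-a)).
  { apply (dpl_ext (fct_cte 1 - mult_real_fct a id)%F _ _ (0 - a * 1)).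
    intro; reflexivity. ring.
    apply derivable_pt_lim_minus. apply derivable_pt_lim_const.
    apply derivable_pt_lim_scal. apply derivable_pt_lim_id. }
  assert (H2 := derivable_pt_lim_mult _ _ _ _ _ H1 (T k y Hy)).
  assert (H3 : derivable_pt_lim (D (pred k)) y (D k y) \/ k = 0%nat).
  { destruct k. now right. left. apply T. exact Hy. }
  destruct H3 as [H3|H3].
  - assert (H4 := derivable_pt_lim_scal _ (INR k * -a) _ _ H3).
    assert (H5 := derivable_pt_lim_plus _ _ _ _ _ H2 H4).
    eapply dpl_ext; [| |exact H5]. intro; reflexivity.
    simpl pred. rewrite S_INR. ring.
  - subst k. simpl pred.
    eapply dpl_ext; [| |exact H2]. intro x. simpl. unfold mult_fct. ring.
    simpl. ring.
Qed.

Fixpoint iterT (a : R) (D : nat -> R -> R) (m : nat) : nat -> R -> R :=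
  match m with O => D | S m' => mulT a (iterT a D m') end.

Lemma iterT_tower a D x0 del m : tower D x0 del -> tower (iterT a D m) x0 del.
Proof. intros T; induction m; simpl; auto. apply mulT_tower; auto. Qed.

Lemma iterT_nonneg a D x0 m : a <= 0 -> 0 <= 1 - a * x0 ->
  (forall k, 0 <= D k x0) -> forall k, 0 <= iterT a D m k x0.
Proof.
  intros Ha Hl HD. induction m; intros k; simpl; auto. unfold mulT.
  apply Rplus_le_le_0_compat. apply Rmult_le_pos; auto.
  apply Rmult_le_pos; auto. apply Rmult_le_pos. apply pos_INR. lra.
Qed.

Lemma iterT_0 a D m y : iterT a D m 0 y = (1 - a*y)^m * D 0%nat y.
Proof. induction m; simpl. ring. unfold mulT. rewrite IHm. simpl. ring. Qed.

Fixpoint ff (n k : nat) : R :=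
  match k with O => 1 | S k' => ff n k' * (INR n - INR k') end.

Lemma ff_zero n k : (n < k)%nat -> ff n k = 0.
Proof.
  induction k; intros H. lia. simpl. destruct (Nat.eq_dec n k).
  subst. ring. rewrite IHk by lia. ring.
Qed.

Lemma term_der (c : R) n k y :
  derivable_pt_lim (fun z => c * ff n k * z^(n-k)) y (c * ff n (S k) * y^(n - S k)).
Proof.
  assert (H := derivable_pt_lim_scal _ (c * ff n k) _ _ (derivable_pt_lim_pow y (n-k))).
  eapply dpl_ext; [| |exact H]. intro; reflexivity.
  simpl. destruct (Compare_dec.le_lt_dec k n) as [h|h].
  - rewrite minus_INR by auto. replace (pred (n-k)) with (n - S k)%nat by lia. ring.
  - rewrite ff_zero by auto. ring.
Qed.

Lemma sum_der (g : nat -> nat -> R -> R) N y :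
  (forall n k, derivable_pt_lim (g n k) y (g n (S k) y)) ->
  forall k, derivable_pt_lim (fun z => sum_f_R0 (fun n => g n k z) N) y (sum_f_R0 (fun n => g n (S k) y) N).
Proof.
  intros H k. induction N; simpl. apply H.
  apply (dpl_ext (plus_fct (fun z => sum_f_R0 (fun n => g n k z) N) (g (S N) k)) _ _
     (sum_f_R0 (fun n => g n (S k) y) N + g (S N) (S k) y)).
  intro; reflexivity. reflexivity. apply derivable_pt_lim_plus; auto.
Qed.

Definition poly_tower (p : nat -> R) (N k : nat) (z : R) : R :=
  sum_f_R0 (fun n => p n * ff n k * z^(n-k)) N.

Lemma poly_tower_der p N k y : derivable_pt_lim (poly_tower p N k) y (poly_tower p N (S k) y).
Proof.
  unfold poly_tower. apply (sum_der (fun n k z => p n * ff n k * z^(n-k))).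
  intros; apply term_der.
Qed.

Lemma poly_tower_vanish p N k z : (N < k)%nat -> poly_tower p N k z = 0.
Proof.
  intros H. unfold poly_tower. apply sum_zero. intros n hn. rewrite ff_zero by lia. ring.
Qed.

Lemma poly_tower_at0 p N k : (k <= N)%nat -> poly_tower p N k 0 = p k * ff k k.
Proof.
  intros H. unfold poly_tower. rewrite (sum_single _ N k); auto.
  rewrite Nat.sub_diag. simpl. ring.
  intros n hn ne. destruct (Compare_dec.le_lt_dec n k).
  rewrite ff_zero by lia. ring. rewrite pow_i by lia. ring.
Qed.

Definition gtower (G : nat -> R -> R) := forall k y, derivable_pt_lim (G k) y (G (S k) y).

Definition Ksum (G : nat -> R -> R) (w : R) (m : nat) (z : R) :=
  sum_f_R0 (fun k => G k z / INR (Factorial.fact k) * (w - z)^k) m.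

Lemma Ksum_der G w m y : gtower G ->
  derivable_pt_lim (Ksum G w m) y (G (S m) y / INR (Factorial.fact m) * (w - y)^m).
Proof.
  intros T. induction m.
  - unfold Ksum. simpl. eapply dpl_ext; [| |apply (T 0%nat y)].
    intro; simpl; field. simpl; field.
  - unfold Ksum. simpl sum_f_R0.
    assert (Hw : derivable_pt_lim (fun z => (w - z) ^ S m) y (INR (S m) * (w - y)^m * (-1))).
    { assert (A1 : derivable_pt_lim (fun z => w - z) y (0 - 1)).
      { apply (dpl_ext (fct_cte w - id)%F _ _ (0 - 1)). intro; reflexivity. reflexivity.
        apply derivable_pt_lim_minus. apply derivable_pt_lim_const. apply derivable_pt_lim_id. }
      assert (A2 := derivable_pt_lim_comp _ _ _ _ _ A1 (derivable_pt_lim_pow (w - y) (S m))).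
      eapply dpl_ext; [| |exact A2]. intro; reflexivity. simpl pred. ring. }
    assert (Hg := derivable_pt_lim_scal _ (/ INR (Factorial.fact (S m))) _ _ (T (S m) y)).
    assert (Hp := derivable_pt_lim_mult _ _ _ _ _ Hg Hw).
    assert (Hs := derivable_pt_lim_plus _ _ _ _ _ IHm Hp).
    eapply dpl_ext; [| |exact Hs].
    intro; unfold plus_fct, mult_fct, mult_real_fct, Ksum; cbn [sum_f_R0]; change (Factorial.fact m + m * Factorial.fact m)%nat with (Factorial.fact (S m)); f_equal; simpl pow; unfold Rdiv; ring.
    unfold mult_fct, mult_real_fct. rewrite fact_simpl, mult_INR. simpl pow. field.
    split. apply INR_fact_neq_0. apply not_0_INR; lia.
Qed.

Lemma taylor G m x0 : gtower G -> (forall z, G (S m) z = 0) -> x0 < 0 ->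
  G 0%nat 0 = sum_f_R0 (fun k => G k x0 / INR (Factorial.fact k) * (0 - x0)^k) m.
Proof.
  intros T Z Hx.
  assert (pr : derivable (Ksum G 0 m)).
  { intro y. exists (G (S m) y / INR (Factorial.fact m) * (0 - y)^m). apply Ksum_der; auto. }
  destruct (MVT_cor1 _ x0 0 pr Hx) as [c [Hc _]].
  rewrite (derive_pt_eq_0 _ _ _ _ (Ksum_der G 0 m c T)) in Hc. rewrite Z in Hc.
  assert (E : Ksum G 0 m 0 = G 0%nat 0).
  { unfold Ksum. rewrite (sum_single _ m 0%nat). simpl. field.
    lia. intros n _ ne. replace (0 - 0) with 0 by ring. rewrite pow_i by lia. ring. }
  replace (0 / INR (Factorial.fact m) * (0 - c)^m * (0 - x0)) with 0 in Hc by (field; apply INR_fact_neq_0).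
  rewrite <- E. change (Ksum G 0 m 0 = Ksum G 0 m x0). lra.
Qed.

Definition pc (s : nat) (a : R) (an : nat -> R) (n : nat) : R :=
  match n with
  | O => 1 | 1%nat => 1 - a * INR s
  | 2%nat => / 2 - a * INR s + a ^ 2 * C s 2
  | _ => an n end.

Lemma P0_eq s a an z : (3 <= s)%nat ->
  poly_tower (pc s a an) s 0 z =
  1 + (1 - a * INR s) * z + (/ 2 - a * INR s + a ^ 2 * C s 2) * z ^ 2
     + sum_f 3 s (fun n => an n * z ^ n).
Proof.
  intros Hs. destruct s as [|[|[|t]]]; try lia. unfold poly_tower, sum_f.
  rewrite decomp_sum by lia. simpl pred. rewrite decomp_sum by lia. simpl pred.
  rewrite decomp_sum by lia. simpl pred.
  replace (S (S (S t)) - 3)%nat with t by lia.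
  rewrite (sum_eq _ (fun x => an (x + 3)%nat * z ^ (x + 3))).
  simpl. ring.
  intros i _. replace (i + 3)%nat with (S (S (S i))) by lia. simpl. ring.
Qed.

Lemma C2 s : (2 <= s)%nat -> C s 2 = INR s * (INR s - 1) / 2.
Proof.
  intros H. destruct s as [|[|t]]; try lia. unfold C.
  replace (S (S t) - 2)%nat with t by lia.
  rewrite !fact_simpl, !mult_INR. rewrite !S_INR. simpl.
  field. apply INR_fact_neq_0.
Qed.

Theorem mainTheorem2 (s : nat) (a : R) (an : nat -> R) :
  (3 <= s)%nat ->
  am_radius_gt (psi_family s a an) (INR s - 1) ->
  0 < a.
Proof.
  intros Hs [r [Hr Hlt]].
  assert (HS : 3 <= INR s) by (replace 3 with (INR 3) by (simpl; ring); apply le_INR; auto).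
  destruct Hr as [Hr0 | [Hr0 Hall]]. { subst; lra. }
  destruct (Rlt_or_le 0 a) as [|Ha]; auto. exfalso.
  set (S' := INR s) in *.
  set (q := 2 * (S' - 1) / (1 - 2 * (S' - 1) * a)).
  assert (qd : 0 < 1 - 2 * (S' - 1) * a) by nra.
  set (r' := Rmin r q).
  assert (rq : r' <= q) by apply Rmin_r.
  assert (rr : r' <= r) by apply Rmin_l.
  assert (rpos : 0 < r').
  { unfold r'. apply Rmin_pos. lra. unfold q. apply Rdiv_lt_0_compat; lra. }
  assert (key1 : r' * (1 - (S' - 1) * a) > S' - 1).
  { unfold r', Rmin. destruct (Rle_dec r q).
    assert (0 <= r * ((S' - 1) * (- a))) by (apply Rmult_le_pos; nra). nra.
    unfold q. apply Rlt_gt. apply (Rmult_lt_reg_r (1 - 2 * (S' - 1) * a)). auto.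
    field_simplify; [|lra]. nra. }
  assert (key2 : 0 < 1 + a * r').
  { assert (0 <= - a * r') by nra.
    assert (- a * q < 1).
    { unfold q. apply (Rmult_lt_reg_r (1 - 2 * (S' - 1) * a)). auto.
      field_simplify; [|lra]. nra. }
    nra. }
  set (x0 := - r').
  assert (Hx0 : - r <= x0 <= 0) by (unfold x0; lra).
  destruct (Hall x0 Hx0) as [delta [D [Hd [H0 [Hder Hpos]]]]].
  set (l0 := 1 - a * x0).
  assert (l0p : 0 < l0) by (unfold l0, x0; lra).
  set (del := Rmin delta (l0 / (1 - a))).
  assert (delp : 0 < del) by (apply Rmin_pos; auto; apply Rdiv_lt_0_compat; lra).
  assert (del1 : del <= delta) by apply Rmin_l.
  assert (del2 : del <= l0 / (1 - a)) by apply Rmin_r.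
  assert (lpos : forall y, Rabs (y - x0) < del -> 0 < 1 - a * y).
  { intros y hy. apply Rabs_def2 in hy. destruct hy as [h1 h2].
    assert (del * (1 - a) <= l0).
    { apply (Rmult_le_reg_r (/ (1 - a))). apply Rinv_0_lt_compat; lra.
      rewrite Rmult_assoc, Rinv_r, Rmult_1_r by lra. exact del2. }
    unfold l0 in *. nra. }
  assert (TD : tower D x0 del).
  { intros k y hy. apply Hder. lra. }
  set (T := iterT a D s).
  assert (TT : tower T x0 del) by (apply iterT_tower; auto).
  assert (Tpos : forall k, 0 <= T k x0).
  { apply iterT_nonneg; auto. unfold l0 in l0p. lra. }
  set (P := poly_tower (pc s a an) s).
  assert (TP : forall k y, Rabs (y - x0) < del -> T k y = P k y).
  { induction k; intros y hy.
    - assert (E : forall z, Rabs (z - x0) < del -> z <> x0 -> T 0%nat z = P 0%nat z).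
      { intros z hz nz. unfold T. rewrite iterT_0. rewrite H0 by lra. unfold P.
        rewrite P0_eq by auto. unfold psi_family. field.
        apply pow_nonzero. specialize (lpos z hz). lra. }
      destruct (Req_dec y x0) as [e|ne]; [|apply E; auto].
      subst y. apply (cont_punct _ _ x0 del); auto.
      + apply (dpl_cont _ _ (T 1%nat x0)). apply TT. rewrite Rminus_diag, Rabs_R0. lra.
      + apply (dpl_cont _ _ (P 1%nat x0)). apply poly_tower_der.
    - apply (uniqueness_limite (T k) y). apply TT; auto.
      apply (dpl_loc (P k) (T k) x0 del); auto.
      intros z hz; symmetry; apply IHk; auto.
      apply poly_tower_der. }
  assert (Ppos : forall k, 0 <= P k x0).
  { intro k. rewrite <- TP. apply Tpos. rewrite Rminus_diag, Rabs_R0. lra. }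
  set (L := fun j z => (S' - 1 - INR j) * P (S j) z - (z - x0) * P (S (S j)) z).
  assert (LT : gtower L).
  { intros j y. unfold L.
    assert (A1 := derivable_pt_lim_scal _ (S' - 1 - INR j) _ _ (poly_tower_der (pc s a an) s (S j) y)).
    assert (A2 : derivable_pt_lim (fun z => z - x0) y 1).
    { apply (dpl_ext (id - fct_cte x0)%F _ _ (1 - 0)). intro; reflexivity. ring.
      apply derivable_pt_lim_minus. apply derivable_pt_lim_id. apply derivable_pt_lim_const. }
    assert (A3 := derivable_pt_lim_mult _ _ _ _ _ A2 (poly_tower_der (pc s a an) s (S (S j)) y)).
    assert (A4 := derivable_pt_lim_minus _ _ _ _ _ A1 A3).
    eapply dpl_ext; [| |exact A4]. intro; reflexivity.
    unfold mult_real_fct, mult_fct. fold P. rewrite S_INR. ring. }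
  assert (LZ : forall z, L (S (pred s)) z = 0).
  { intro z. unfold L. unfold P. rewrite !poly_tower_vanish by lia. ring. }
  assert (Hx0n : x0 < 0) by (unfold x0; lra).
  assert (Tay := taylor L (pred s) x0 LT LZ Hx0n).
  assert (Lnn : 0 <= L 0%nat 0).
  { rewrite Tay. apply sum_nonneg. intros k hk.
    apply Rmult_le_pos. apply Rmult_le_pos.
    - unfold L. replace (x0 - x0) with 0 by ring. rewrite Rmult_0_l, Rminus_0_r.
      apply Rmult_le_pos; auto.
      assert (INR k <= INR (pred s)) by (apply le_INR; auto).
      assert (E : INR s = INR (pred s) + 1) by (rewrite <- S_INR; f_equal; lia).
      unfold S'. lra.
    - left. apply Rinv_0_lt_compat. apply INR_fact_lt_0.
    - apply pow_le. unfold x0; lra. }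
  unfold L in Lnn. unfold P in Lnn.
  rewrite !poly_tower_at0 in Lnn by lia. simpl in Lnn. rewrite C2 in Lnn by lia.
  fold S' in Lnn.
  assert (b0 : 0 <= - a) by lra.
  assert (F1 : 0 < 1 - S' * a) by nra.
  assert (F2 : (r' * (1 - (S' - 1) * a) - (S' - 1)) * (1 - S' * a) > 0).
  { apply Rmult_gt_0_compat; lra. }
  assert (F3 : 0 <= r' * (- a)) by nra.
  assert (Id : (S' - 1 - 0) * ((1 - a * S') * (1 * (1 - 0))) -
    (0 - x0) * ((/ 2 - a * S' + a * (a * 1) * (S' * (S' - 1) / 2)) *
    (1 * (1 + 1 - 0) * (1 + 1 - 1)))
    = - ((r' * (1 - (S' - 1) * a) - (S' - 1)) * (1 - S' * a)) - r' * (- a)).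
  { unfold x0. field. }
  rewrite Id in Lnn. lra.
Qed.
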